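(* In the setting of the context, for distinct $p,a\in C$, $\operatorname{diam}_{S_p}(\pi_p(a))\le 4\delta$. In particular Axiom (P1) holds for the data $(\{S_p\}_{p\in C},\{\pi_p\})$ with any constant $\theta\ge4\delta$.
   Context: $X$ is a $\delta$-hyperbolic geodesic metric space ($\delta>0$, every geodesic triangle $\delta$-thin). $G$ acts on $X$ by isometries and $\mathcal{C}=(C,\{G_c\})$ is a $\rho$-separated fairly rotating family with $\rho\ge20\delta$ (i.e. $C\subseteq X$ is $G$-invariant, $G_c$ fixes $c$, $G_{gc}=gG_cg^{-1}$, distinct points of $C$ are at distance $\ge\rho$, and for $c\in C$, $g\in G_c\setminus\{1\}$, $x\in C\setminus\{c\}$ some geodesic from $x$ to $gx$ meets the closed $1$-ball about $c$). Fix $2+2\delta\le R\le\frac\rho2-3\delta$. For $p\in C$, $S_p=\{x:d(x,p)=R\}$ with metric $d_{S_p}(x,y)=$ infimum of lengths of paths from $x$ to $y$ in $X\setminus B_R(p)$ (possibly $\infty$), where $B_R(p)$ is the open ball. For $a$ with $d(a,p)\ge R$, $\pi_p(a)\subseteq S_p$ is the set of points where geodesics $[p,a]$ meet $S_p$ (equivalently nearest-point projections of $a$ to $S_p$). *)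

(* Defs.v *)
From Stdlib Require Import Reals Lra List Sorting.Sorted.
From Coquelicot Require Import Rbar Lub.
Open Scope R_scope.
Set Implicit Arguments.

Section Geometry.
Variable X : Type.
Variable d : X -> X -> R.

Record is_metric : Prop := {
  met_refl : forall x, d x x = 0;
  met_sep : forall x y, d x y = 0 -> x = y;
  met_sym : forall x y, d x y = d y x;
  met_tri : forall x y z, d x z <= d x y + d y z }.

Definition geodesic (g : R -> X) (x y : X) : Prop :=
  g 0 = x /\ g (d x y) = y /\
  forall s t, 0 <= s <= d x y -> 0 <= t <= d x y -> d (g s) (g t) = Rabs (s - t).

Definition geodesic_space : Prop :=
  forall x y, exists g, geodesic g x y.

Definition gromov_product (x y z : X) : R := (d x y + d x z - d y z) / 2.

(* every geodesic triangle is delta-thin (insize / tripod-map definition):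
   on the two sides issuing from any vertex x, points at the same distance
   t <= (y|z)_x from x are delta-close. *)
Definition thin_triangles (delta : R) : Prop :=
  forall x y z g1 g2, geodesic g1 x y -> geodesic g2 x z ->
    forall t, 0 <= t <= gromov_product x y z -> d (g1 t) (g2 t) <= delta.

Definition open_ball (p : X) (r : R) (x : X) : Prop := d x p < r.

Definition sphere (p : X) (r : R) (x : X) : Prop := d x p = r.

Definition path_continuous (gam : R -> X) : Prop :=
  forall t, 0 <= t <= 1 -> forall eps, 0 < eps -> exists eta, 0 < eta /\
    forall s, 0 <= s <= 1 -> Rabs (s - t) < eta -> d (gam s) (gam t) < eps.

Fixpoint chain_sum (gam : R -> X) (l : list R) : R :=
  match l with
  | a :: ((b :: _) as tl) => d (gam a) (gam b) + chain_sum gam tl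
  | _ => 0
  end.

Definition path_length (gam : R -> X) : Rbar :=
  Lub_Rbar (fun s => exists l : list R,
    Sorted Rle l /\ (forall t, In t l -> 0 <= t <= 1) /\ s = chain_sum gam l).

(* d_{S_p}(x,y) : infimum of lengths of paths from x to y in X \ B_r(p);
   +oo if there is no such path of finite length *)
Definition sphere_dist (p : X) (r : R) (x y : X) : Rbar :=
  Glb_Rbar (fun l => exists gam : R -> X,
    path_continuous gam /\ gam 0 = x /\ gam 1 = y /\
    (forall t, 0 <= t <= 1 -> ~ open_ball p r (gam t)) /\
    path_length gam = Finite l).

Definition proj (p : X) (r : R) (a : X) (x : X) : Prop :=
  exists g, geodesic g p a /\ x = g r.

Definition sphere_diam_le (p : X) (r : R) (A : X -> Prop) (c : R) : Prop :=
  forall x y, A x -> A y -> Rbar_le (sphere_dist p r x y) (Finite c).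

End Geometry.

Record is_group (G : Type) (mul : G -> G -> G) (e : G) (inv : G -> G) : Prop := {
  grp_assoc : forall a b c, mul a (mul b c) = mul (mul a b) c;
  grp_idl : forall a, mul e a = a;
  grp_idr : forall a, mul a e = a;
  grp_invl : forall a, mul (inv a) a = e;
  grp_invr : forall a, mul a (inv a) = e }.

Record is_subgroup (G : Type) (mul : G -> G -> G) (e : G) (inv : G -> G)
  (H : G -> Prop) : Prop := {
  sub_e : H e;
  sub_mul : forall a b, H a -> H b -> H (mul a b);
  sub_inv : forall a, H a -> H (inv a) }.

Record isometric_action (X G : Type) (d : X -> X -> R) (mul : G -> G -> G) (e : G)
  (act : G -> X -> X) : Prop := {
  act_e : forall x, act e x = x;
  act_mul : forall g h x, act (mul g h) x = act g (act h x);
  act_isom : forall g x y, d (act g x) (act g y) = d x y }.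

Record fairly_rotating_family (X G : Type) (d : X -> X -> R) (mul : G -> G -> G)
  (e : G) (inv : G -> G) (act : G -> X -> X) (C : X -> Prop) (Gc : X -> G -> Prop)
  (rho : R) : Prop := {
  frf_invariant : forall g c, C c -> C (act g c);
  frf_subgroup : forall c, C c -> is_subgroup mul e inv (Gc c);
  frf_fix : forall c g, C c -> Gc c g -> act g c = c;
  frf_conj : forall c g h, C c ->
      (Gc (act g c) h <-> exists k, Gc c k /\ h = mul (mul g k) (inv g));
  frf_sep : forall c c', C c -> C c' -> c <> c' -> rho <= d c c';
  frf_rot : forall c g x, C c -> Gc c g -> g <> e -> C x -> x <> c ->
      exists gm, geodesic d gm x (act g x) /\
        exists t, 0 <= t <= d x (act g x) /\ d (gm t) c <= 1 }.

(* Main.v *)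
Require Import Defs.
From Stdlib Require Import Reals.
From Coquelicot Require Import Rbar.
From Stdlib Require Import Lra List Sorting.Sorted.
From Coquelicot Require Import Lub.
Open Scope R_scope.

Section Aux.
Variable X : Type.
Variable d : X -> X -> R.
Hypothesis Hm : is_metric d.

Definition lip (gam : R -> X) (K a b : R) : Prop :=
  forall s t, a <= s <= b -> a <= t <= b -> d (gam s) (gam t) <= K * Rabs (s - t).

Lemma glue_lip f f' K a u b : lip f K a u -> lip f' K u b -> f u = f' u ->
  lip (fun s => if Rle_dec s u then f s else f' s) K a b.
Proof.
  intros H1 H2 E s t Hs Ht.
  destruct (Rle_dec s u) as [Hsu|Hsu]; destruct (Rle_dec t u) as [Htu|Htu].
  - apply H1; lra.
  - assert (A := H1 s u ltac:(lra) ltac:(lra)).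
    assert (B := H2 u t ltac:(lra) ltac:(lra)).
    assert (T := met_tri Hm (f s) (f u) (f' t)). rewrite E in A, T.
    assert (Rabs (s - t) = Rabs (s - u) + Rabs (u - t)) by (split_Rabs; lra).
    rewrite H; lra.
  - assert (A := H2 s u ltac:(lra) ltac:(lra)).
    assert (B := H1 u t ltac:(lra) ltac:(lra)).
    assert (T := met_tri Hm (f' s) (f' u) (f t)). rewrite <- E in A, T.
    assert (Rabs (s - t) = Rabs (s - u) + Rabs (u - t)) by (split_Rabs; lra).
    rewrite H; lra.
  - apply H2; lra.
Qed.

Lemma geo_lip g x y al be K a b : geodesic d g x y -> Rabs be <= K ->
  (forall s, a <= s <= b -> 0 <= al + be * s <= d x y) ->
  lip (fun s => g (al + be * s)) K a b.
Proof.
  intros [_ [_ G]] HK Hr s t Hs Ht.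
  rewrite G by (apply Hr; lra).
  replace (al + be * s - (al + be * t)) with (be * (s - t)) by ring.
  rewrite Rabs_mult. apply Rmult_le_compat_r; [apply Rabs_pos|lra].
Qed.

Lemma chain_le gam K : 0 <= K -> lip gam K 0 1 ->
  forall l a, Sorted Rle (a :: l) -> (forall t, In t (a :: l) -> 0 <= t <= 1) ->
  chain_sum d gam (a :: l) <= K * (1 - a).
Proof.
  intros HK HL l. induction l as [|b l IH]; intros a HS Hin.
  - simpl. assert (0 <= a <= 1) by (apply Hin; simpl; auto). nra.
  - change (d (gam a) (gam b) + chain_sum d gam (b :: l) <= K * (1 - a)).
    apply Sorted_inv in HS as [HS Hd]. inversion Hd; subst.
    assert (Ha : 0 <= a <= 1) by (apply Hin; simpl; auto).
    assert (Hb : 0 <= b <= 1) by (apply Hin; simpl; auto).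
    assert (IH' := IH b HS ltac:(intros t Ht; apply Hin; simpl; auto)).
    assert (A := HL a b Ha Hb). rewrite Rabs_left1 in A by lra. nra.
Qed.

Lemma length_fin gam K : 0 <= K -> lip gam K 0 1 ->
  exists l, path_length d gam = Finite l /\ l <= K.
Proof.
  intros HK HL. unfold path_length.
  destruct (Lub_Rbar_correct (fun s => exists l : list R,
    Sorted Rle l /\ (forall t, In t l -> 0 <= t <= 1) /\ s = chain_sum d gam l)) as [U B].
  assert (H0 : Rbar_le (Finite 0) (Lub_Rbar (fun s => exists l : list R,
    Sorted Rle l /\ (forall t, In t l -> 0 <= t <= 1) /\ s = chain_sum d gam l))).
  { apply U. exists nil. split; [constructor|]. split; [intros t []|reflexivity]. }
  assert (H1 : Rbar_le (Lub_Rbar (fun s => exists l : list R,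
    Sorted Rle l /\ (forall t, In t l -> 0 <= t <= 1) /\ s = chain_sum d gam l)) (Finite K)).
  { apply B. intros x [l [HS [Hin ->]]]. simpl. destruct l as [|a l].
    - simpl; lra.
    - assert (A := chain_le gam K HK HL l a HS Hin).
      assert (0 <= a <= 1) by (apply Hin; simpl; auto). nra. }
  destruct (Lub_Rbar _) as [r| |]; simpl in H0, H1; try contradiction.
  exists r; split; [reflexivity|exact H1].
Qed.

Lemma lip_cont gam K : 0 <= K -> lip gam K 0 1 -> path_continuous d gam.
Proof.
  intros HK HL t Ht eps He. exists (eps / (K + 1)). split.
  - apply Rdiv_lt_0_compat; lra.
  - intros s Hs Hst. assert (A := HL s t Hs Ht).
    assert (K * Rabs (s - t) < eps).
    { assert (Rabs (s - t) * (K + 1) < eps).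
      { apply (Rmult_lt_compat_r (K+1)) in Hst; [|lra].
        unfold Rdiv in Hst. rewrite Rmult_assoc, Rinv_l in Hst by lra. lra. }
      assert (0 <= Rabs (s - t)) by apply Rabs_pos. nra. }
    lra.
Qed.

End Aux.

Theorem lemma3p3 (X G : Type) (d : X -> X -> R) (delta rho R0 : R)
  (mul : G -> G -> G) (e : G) (inv : G -> G) (act : G -> X -> X)
  (C : X -> Prop) (Gc : X -> G -> Prop) :
  is_metric d -> geodesic_space d -> 0 < delta -> thin_triangles d delta ->
  is_group mul e inv -> isometric_action d mul e act ->
  fairly_rotating_family d mul e inv act C Gc rho -> 20 * delta <= rho ->
  2 + 2 * delta <= R0 -> R0 <= rho / 2 - 3 * delta ->
  (forall p a, C p -> C a -> p <> a ->
     sphere_diam_le d p R0 (proj d p R0 a) (4 * delta)) /\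
  (forall theta, 4 * delta <= theta ->
     forall p a, C p -> C a -> p <> a ->
       sphere_diam_le d p R0 (proj d p R0 a) theta).
Proof.
  intros Hm Hgs Hd Hth _ _ Hfrf Hrho HR1 HR2.
  assert (main : forall p a, C p -> C a -> p <> a ->
     sphere_diam_le d p R0 (proj d p R0 a) (4 * delta)).
  { intros p a Cp Ca Hpa x y [g1 [G1 ->]] [g2 [G2 ->]].
    assert (Hpa' := frf_sep Hfrf Cp Ca Hpa).
    set (D := d p a) in *.
    set (m := R0 + delta / 2).
    assert (Hmd : m <= D) by (unfold m; lra).
    destruct (Hgs (g1 m) (g2 m)) as [h Hh].
    set (L := d (g1 m) (g2 m)).
    assert (HL : L <= delta).
    { apply (Hth p a a g1 g2 G1 G2). unfold gromov_product.
      rewrite (met_refl Hm a). fold D. unfold m; lra. }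
    assert (HL0 : 0 <= L).
    { assert (T := met_tri Hm (g1 m) (g2 m) (g1 m)).
      rewrite (met_refl Hm), (met_sym Hm (g2 m)) in T. unfold L; lra. }
    destruct G1 as [G1a [G1b G1c]]. destruct G2 as [G2a [G2b G2c]].
    destruct Hh as [Hha [Hhb Hhc]]. fold L in Hhb, Hhc.
    set (f1 := fun s => g1 (R0 + (3 * delta / 2) * s)).
    set (f2 := fun s => h (- L + (3 * L) * s)).
    set (f3 := fun s => g2 ((R0 + 3 * delta / 2) + (- (3 * delta / 2)) * s)).
    set (gi := fun s => if Rle_dec s (1/3) then f1 s else f2 s).
    set (gam := fun s => if Rle_dec s (2/3) then gi s else f3 s).

    assert (G1' : geodesic d g1 p a) by (repeat split; assumption).
    assert (G2' : geodesic d g2 p a) by (repeat split; assumption).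
    assert (Hh' : geodesic d h (g1 m) (g2 m)) by (repeat split; assumption).
    assert (K1 : lip X d f1 (3 * delta) 0 (1/3)).
    { apply geo_lip with (x:=p) (y:=a); [exact G1'|rewrite Rabs_pos_eq; lra|].
      intros s Hs; fold D; unfold m in Hmd; nra. }
    assert (K2 : lip X d f2 (3 * delta) (1/3) (2/3)).
    { apply geo_lip with (x:=g1 m) (y:=g2 m); [exact Hh'|rewrite Rabs_pos_eq; lra|].
      intros s Hs; fold L; nra. }
    assert (K3 : lip X d f3 (3 * delta) (2/3) 1).
    { apply geo_lip with (x:=p) (y:=a); [exact G2'|rewrite Rabs_left1; lra|].
      intros s Hs; fold D; unfold m in Hmd; nra. }
    assert (E1 : f1 (1/3) = f2 (1/3)).
    { unfold f1, f2. replace (- L + 3 * L * (1/3)) with 0 by field.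
      rewrite Hha. f_equal. unfold m; field. }
    assert (Ki : lip X d gi (3 * delta) 0 (2/3)).
    { apply glue_lip; auto. }
    assert (E2 : gi (2/3) = f3 (2/3)).
    { unfold gi. destruct (Rle_dec (2/3) (1/3)); [lra|].
      unfold f2, f3. replace (- L + 3 * L * (2/3)) with L by field.
      rewrite Hhb. f_equal. unfold m; field. }
    assert (K : lip X d gam (3 * delta) 0 1).
    { apply glue_lip; auto. }
    destruct (length_fin X d gam (3*delta) ltac:(lra) K) as [l [Hl Hl3]].
    destruct (Glb_Rbar_correct (fun l => exists gam : R -> X,
      path_continuous d gam /\ gam 0 = g1 R0 /\ gam 1 = g2 R0 /\
      (forall t, 0 <= t <= 1 -> ~ open_ball d p R0 (gam t)) /\
      path_length d gam = Finite l)) as [LB _].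
    unfold sphere_dist.
    apply Rbar_le_trans with (Finite l); [|simpl; lra].
    apply LB. exists gam. split; [apply lip_cont with (K:=3*delta); auto; lra|].
    split.
    { unfold gam, gi. destruct (Rle_dec 0 (2/3)); [|lra].
      destruct (Rle_dec 0 (1/3)); [|lra]. unfold f1. f_equal; ring. }
    split.
    { unfold gam. destruct (Rle_dec 1 (2/3)); [lra|].
      unfold f3. f_equal; field. }
    split; [|exact Hl].
    intros t Ht. unfold open_ball, gam, gi.
    destruct (Rle_dec t (2/3)); [destruct (Rle_dec t (1/3))|].
    - unfold f1.
      rewrite <- G1a. rewrite G1c by (fold D; unfold m in Hmd; nra).
      rewrite Rminus_0_r, Rabs_pos_eq; nra.
    - unfold f2. set (u := - L + 3 * L * t).
      assert (Hu : 0 <= u <= L) by (unfold u; nra).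
      assert (A : d (g1 m) p = m).
      { rewrite <- G1a. rewrite G1c by (fold D; unfold m in *; lra).
        rewrite Rminus_0_r, Rabs_pos_eq; unfold m; lra. }
      assert (B : d (g2 m) p = m).
      { rewrite <- G2a. rewrite G2c by (fold D; unfold m in *; lra).
        rewrite Rminus_0_r, Rabs_pos_eq; unfold m; lra. }
      assert (A' : d (g1 m) (h u) = u).
      { rewrite <- Hha. rewrite Hhc by lra. rewrite Rabs_left1; lra. }
      assert (B' : d (g2 m) (h u) = L - u).
      { rewrite <- Hhb at 1. rewrite Hhc by lra. rewrite Rabs_pos_eq; lra. }
      assert (T1 := met_tri Hm (g1 m) (h u) p).
      assert (T2 := met_tri Hm (g2 m) (h u) p).
      unfold m in *. lra.
    - unfold f3. 
      rewrite <- G2a. rewrite G2c by (fold D; unfold m in Hmd; nra).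
      rewrite Rminus_0_r, Rabs_pos_eq; nra.
  }
  split; [exact main|].
  intros theta Ht p a Cp Ca Hpa x y Hx Hy.
  apply Rbar_le_trans with (Finite (4 * delta)); [exact (main p a Cp Ca Hpa x y Hx Hy)|simpl; lra].
Qed.
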